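(* Let $R$ be an associative ring with unity, $\sigma$ an endomorphism of $R$ and $\delta$ a $\sigma$-derivation of $R$. Assume $R$ is right p.q.-Baer and $R$ satisfies one of the following: (i) $R$ is $(\sigma,\delta)$-skew Armendariz and satisfies $(\mathcal{C}_\sigma)$; (ii) $\mathcal{S}_\ell(R)=\mathcal{B}(R)$, $\sigma(Re)\subseteq Re$ for all $e\in\mathcal{B}(R)$, and $R$ satisfies $(\mathcal{C}_\sigma)$; (iii) $R$ is $\sigma$-rigid. Then the Ore extension $R[x;\sigma,\delta]$ is right p.q.-Baer.
   Context: A $\sigma$-derivation is an additive map $\delta$ with $\delta(ab)=\sigma(a)\delta(b)+\delta(a)b$. $R[x;\sigma,\delta]$ is the ring of polynomials $\sum a_ix^i$ (coefficients on the left) with $xa=\sigma(a)x+\delta(a)$. $R$ is $(\sigma,\delta)$-skew Armendariz if whenever $p=\sum_{i=0}^n a_ix^i$, $q=\sum_{j=0}^m b_jx^j\in R[x;\sigma,\delta]$ satisfy $pq=0$, then $a_ix^ib_jx^j=0$ in $R[x;\sigma,\delta]$ for all $i,j$. $R$ satisfies $(\mathcal{C}_\sigma)$ if $a\sigma(b)=0$ implies $ab=0$ for all $a,b\in R$. $\mathcal{S}_\ell(R)$ is the set of idempotents $e$ with $ere=re$ for all $r$; $\mathcal{B}(R)$ is the set of central idempotents. $R$ is $\sigma$-rigid if $a\sigma(a)=0$ implies $a=0$. A ring $T$ is right p.q.-Baer if for every $a\in T$ the right annihilator $\{t\in T\mid aTt=0\}$ is generated as a right ideal by an idempotent. *)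

(* Defs.v *)
From HB Require Import structures.
From mathcomp Require Import all_boot all_algebra.
Set Implicit Arguments. Unset Strict Implicit. Unset Printing Implicit Defensive.
Import GRing.Theory.
Local Open Scope ring_scope.

(* Ore extension R[x; sigma, delta], carrier {poly R} (coefficients on the left),
   with multiplication determined by  x a = sigma(a) x + delta(a). *)
Section Ore.
Variable R : nzRingType.
Variables (sigma delta : R -> R).

Definition ore_xmul (q : {poly R}) : {poly R} :=
  map_poly sigma q * 'X + map_poly delta q.

Definition ore_mul (p q : {poly R}) : {poly R} :=
  \sum_(i < size p) (p`_i)%:P * iter (i : nat) ore_xmul q.

Definition ore_mono (a : R) (i : nat) : {poly R} := a%:P * 'X^i.

Definition sigma_derivation : Prop :=
  (forall a b, delta (a + b) = delta a + delta b) /\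
  (forall a b, delta (a * b) = sigma a * delta b + delta a * b).

Definition skew_Armendariz : Prop :=
  forall p q : {poly R}, ore_mul p q = 0 ->
    forall i j, ore_mul (ore_mono p`_i i) (ore_mono q`_j j) = 0.

Definition cond_C : Prop := forall a b : R, a * sigma b = 0 -> a * b = 0.

Definition sigma_rigid : Prop := forall a : R, a * sigma a = 0 -> a = 0.
End Ore.

Definition is_idem (R : nzRingType) (e : R) := e * e = e.

Definition in_Sl (R : nzRingType) (e : R) := is_idem e /\ forall r, e * r * e = r * e.
Definition in_B (R : nzRingType) (e : R) := is_idem e /\ forall r, e * r = r * e.

Definition right_pq_Baer (T : Type) (mul : T -> T -> T) (zero : T) : Prop :=
  forall a : T, exists e : T, mul e e = e /\
    forall t : T, (forall s : T, mul (mul a s) t = zero) <-> exists u : T, t = mul e u.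

(* Main.v *)
Require Import Defs.
From HB Require Import structures.
From mathcomp Require Import all_boot all_algebra.
Import GRing.Theory.
Local Open Scope ring_scope.

Section Proof.
Variable R : nzRingType.
Variable sigma : {rmorphism R -> R}.
Variable delta : R -> R.
Hypothesis Hd : sigma_derivation sigma delta.
Hypothesis HC : cond_C sigma.
Hypothesis HB : right_pq_Baer (@GRing.mul R) 0.

Local Notation xm := (ore_xmul sigma delta).
Local Notation om := (ore_mul sigma delta).

Lemma deltaD a b : delta (a + b) = delta a + delta b. Proof. by case: Hd. Qed.
Lemma deltaM a b : delta (a * b) = sigma a * delta b + delta a * b. Proof. by case: Hd. Qed.
Lemma delta0 : delta 0 = 0.
Proof. have h := deltaD 0 0; rewrite addr0 in h. by apply: (addrI (delta 0)); rewrite addr0 -h. Qed.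
Lemma deltaN a : delta (- a) = - delta a.
Proof. apply/eqP; rewrite -addr_eq0 -deltaD addrC subrr delta0 //. Qed.
Lemma deltaB a b : delta (a - b) = delta a - delta b.
Proof. by rewrite deltaD deltaN. Qed.

Lemma coef_xm v k : (xm v)`_k = (if k is k'.+1 then sigma v`_k' else 0) + delta v`_k.
Proof.
rewrite /ore_xmul coefD coefMX (coef_map_id0 _ _ delta0) coef_map /=.
by case: k.
Qed.

Lemma xmB u v : xm (u - v) = xm u - xm v.
Proof.
apply/polyP=> k; rewrite coefB !coef_xm !coefB deltaB.
case: k => [|k]; first by rewrite !add0r.
rewrite coefB (rmorphB sigma) opprD !addrA; congr (_ + _); rewrite -!addrA; congr (_ + _); by rewrite addrC.
Qed.

Lemma iter_xmB n u v : iter n xm (u - v) = iter n xm u - iter n xm v.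
Proof. elim: n => [|n IH] //=; by rewrite IH xmB. Qed.

Lemma omE (p v : {poly R}) N : (size p <= N)%N -> om p v = \sum_(i < N) (p`_i)%:P * iter i xm v.
Proof.
move=> hN; rewrite /ore_mul (big_ord_widen N (fun i => (p`_i)%:P * iter i xm v)) //.
rewrite big_mkcond /=; apply: eq_bigr => i _; case: ifP => // /negbT; rewrite -leqNgt => hi.
by rewrite nth_default // polyC0 mul0r.
Qed.

Lemma omB (w u v : {poly R}) : om w (u - v) = om w u - om w v.
Proof. rewrite /ore_mul -sumrB; apply: eq_bigr => i _; by rewrite iter_xmB mulrBr. Qed.

Lemma omC c t : om c%:P t = c%:P * t.
Proof. by rewrite (@omE _ _ 1 (size_polyC_leq1 c)) big_ord1 /= coefC. Qed.

Lemma coef_om (p v : {poly R}) k : (om p v)`_k = \sum_(i < size p) p`_i * (iter i xm v)`_k.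
Proof. rewrite /ore_mul coef_sum; apply: eq_bigr => i _; by rewrite coefCM. Qed.


Definition lsc (e : R) := e * e = e /\ forall r, r * e = e * r * e.

Lemma baer_char a : exists e, lsc e /\ forall y, (forall r, a * r * y = 0) <-> y = e * y.
Proof.
have [e [ie he]] := HB a.
have ann : forall s, a * s * e = 0 by move=> s; apply: (proj2 (he e)) _ s; exists 1; rewrite mulr1.
have ch : forall y, (forall r, a * r * y = 0) <-> y = e * y.
  move=> y; split.
    move=> H; have [u ->] := proj1 (he y) H; by rewrite mulrA ie.
  by move=> hy; apply: (proj2 (he y)); exists y.
exists e; split => //; split => // r.
have : r * e = e * (r * e) by apply: (proj1 (ch _)) => s; rewrite mulrA -(mulrA a) ann.
by rewrite mulrA.
Qed.

Lemma E_exists (f : nat -> R) N : exists e, lsc e /\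
  forall y, (forall i, (i < N)%N -> forall r, f i * r * y = 0) <-> y = e * y.
Proof.
elim: N => [|N [el [[il rl] hl]]].
  exists 1; split; [split; [exact: mulr1 | by move=> r; rewrite !mulr1 mul1r] | ].
  by move=> y; split; [rewrite mul1r | move=> _ i].
have [ea [[ia ra] ha]] := baer_char (f N).
exists (ea * el); split.
  split.
    by rewrite -!mulrA [el * (ea * el)]mulrA -(rl ea) mulrA ia.
  move=> r.
  have h1 : r * (ea * el) = el * (ea * r * ea) * el by rewrite mulrA (rl (r * ea)) (ra r).
  have h2 : el * ea = ea * el * ea := ra el.
  transitivity (ea * el * (ea * r * ea) * el); first by rewrite h1 !mulrA h2.
  by rewrite -(ra r) !mulrA.
move=> y; split.
  move=> H.
  have ey : y = ea * y by apply: (proj1 (ha y)) => r; apply: H.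
  have ly : y = el * y by apply: (proj1 (hl y)) => i hi r; apply: H; apply: ltnW.
  by rewrite -mulrA -ly -ey.
move=> hy i; rewrite ltnS leq_eqVlt => /orP [/eqP -> | hi].
  apply: (proj2 (ha y)); by rewrite {2}hy !mulrA ia.
apply: (proj2 (hl y)) => //.
by rewrite {2}hy !mulrA -(rl ea) -hy.
Qed.

Lemma lsc_sigma e : lsc e -> sigma e = e * sigma e.
Proof.
move=> [ie re].
have h1 : (1 - e) * sigma e * sigma (1 - e) = 0.
  by rewrite -mulrA -rmorphM mulrBr mulr1 ie subrr rmorph0 mulr0.
have h2 := HC _ _ h1.
have h3 : (1 - e) * sigma e * e = 0 by rewrite -mulrA re !mulrA mulrBl mul1r ie subrr !mul0r.
move: h2; rewrite mulrBr mulr1 h3 subr0 mulrBl mul1r => /eqP; rewrite subr_eq0 => /eqP //.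
Qed.

Lemma lsc_delta e : lsc e -> delta e = e * delta e.
Proof.
move=> le; have [ie re] := le.
have h : delta e = e * (sigma e * delta e + delta e * e).
  by rewrite {1}(_ : e = e * e) // deltaM mulrDr !mulrA -(lsc_sigma _ le) -re.
by rewrite {2}h mulrA ie -h.
Qed.

Lemma xm_clos e v : lsc e -> v = e%:P * v -> xm v = e%:P * xm v.
Proof.
move=> le hv; have se := lsc_sigma _ le; have de := lsc_delta _ le.
have hc : forall j, v`_j = e * v`_j by move=> j; rewrite {1}hv coefCM.
have s1 : forall a, a = e * a -> sigma a = e * sigma a.
  by move=> a ha; rewrite ha rmorphM mulrA -se.
have d1 : forall a, a = e * a -> delta a = e * delta a.
  by move=> a ha; rewrite ha deltaM mulrDr !mulrA -se -de.
apply/polyP => k; rewrite coefCM !coef_xm mulrDr -d1 //.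
by case: k => [|k]; rewrite ?mulr0 // -s1.
Qed.

Lemma iter_clos e v n : lsc e -> v = e%:P * v -> iter n xm v = e%:P * iter n xm v.
Proof. move=> le hv; elim: n => [|n IH] //=; exact: xm_clos. Qed.

Lemma kill e (w u : {poly R}) : lsc e -> (forall k, w`_k * e = 0) -> u = e%:P * u -> om w u = 0.
Proof.
move=> le hw hu; rewrite /ore_mul big1 // => i _.
by rewrite (iter_clos _ _ i le hu) mulrA -polyCM hw polyC0 mul0r.
Qed.

Lemma coef_kill e (p s : {poly R}) : lsc e ->
  (forall y, (forall i, (i < size p)%N -> forall r, p`_i * r * y = 0) <-> y = e * y) ->
  forall k, (om p s)`_k * e = 0.
Proof.
move=> [ie re] he k; rewrite coef_om mulr_suml big1 // => i _.
by apply: (proj2 (he e)) => //; rewrite ie.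
Qed.


Lemma iter_deg (v : {poly R}) m j : (size v <= m.+1)%N ->
  (size (iter j xm v) <= m.+1 + j)%N /\ (iter j xm v)`_(m + j) = iter j sigma v`_m.
Proof.
move=> hv; elim: j => [|j [IHs IHc]]; first by rewrite !addn0.
rewrite /=; split.
  apply/leq_sizeP => k hk; rewrite coef_xm.
  case: k hk => [|k] hk; first by rewrite addnS in hk.
  rewrite addnS ltnS in hk.
  have z1 : (iter j xm v)`_k = 0 by apply: nth_default; exact: leq_trans IHs hk.
  have z2 : (iter j xm v)`_k.+1 = 0 by apply: nth_default; apply: leq_trans IHs _; exact: leqW.
  by rewrite z1 z2 rmorph0 delta0 addr0.
have z2 : (iter j xm v)`_(m + j).+1 = 0 by apply: nth_default; rewrite -addSn.
by rewrite addnS coef_xm IHc z2 delta0 addr0.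
Qed.

Lemma Cn n a c : a * iter n sigma c = 0 -> a * c = 0.
Proof. elim: n => [|n IH] //= h; apply: IH; exact: HC h. Qed.

Lemma iterM n a b : iter n sigma (a * b) = iter n sigma a * iter n sigma b.
Proof. elim: n => [|n IH] //=; by rewrite IH rmorphM. Qed.


Lemma sum_if n i (Y : R) : \sum_(j < n) (if (j : nat) == i then Y else 0) = if (i < n)%N then Y else 0.
Proof.
case: ltnP => h.
  rewrite (bigD1 (Ordinal h)) //= eqxx big1 ?addr0 // => j hj.
  case: eqP => // hji; exfalso; move/eqP: hj; apply; exact: val_inj.
rewrite big1 // => j _; case: eqP => // hji.
by have := ltn_ord j; rewrite hji ltnNge h.
Qed.

Lemma key (p t : {poly R}) m : size t = m.+1 -> (forall s, om (om p s) t = 0) ->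
  forall i r, p`_i * r * t`_m = 0.
Proof.
move=> st H.
have main : forall d i, (size p <= i + d)%N -> forall r, p`_i * r * t`_m = 0.
  elim=> [|d IH] i hi r.
    by rewrite addn0 in hi; rewrite nth_default // !mul0r.
  have IHj : forall j, (i < j)%N -> forall r, p`_j * r * t`_m = 0.
    move=> j hj; apply: IH; apply: leq_trans hi _; by rewrite addnS -addSn leq_add2r.
  have [g [lg hg]] := E_exists (fun j => if (i < j)%N then p`_j else 0) (size p).
  have [ig rg] := lg.
  have gb : t`_m = g * t`_m.
    apply: (proj1 (hg _)) => j _ r'; case: ifP => hij; [exact: IHj | by rewrite !mul0r].
  have pg : forall j, (i < j)%N -> forall r', p`_j * r' * g = 0.
    move=> j hj r'; case: (ltnP j (size p)) => hjs.
      by have := proj2 (hg g) (esym ig) j hjs r'; rewrite hj.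
    by rewrite nth_default // !mul0r.
  pose s := (r * g)%:P.
  have sg : s = g%:P * s by rewrite -polyCM mulrA -rg.
  have s1 : (size s <= 0.+1)%N := size_polyC_leq1 _.
  pose w := om p s.
  have wk : forall k, (i <= k)%N -> w`_k = if k == i then p`_i * iter i sigma (r * g) else 0.
    move=> k hk; rewrite coef_om.
    have term : forall j : 'I_(size p), p`_j * (iter j xm s)`_k =
        if (j : nat) == i then (if k == i then p`_i * iter i sigma (r * g) else 0) else 0.
      move=> j; have [ds dc] := iter_deg _ _ (j : nat) s1.
      case: (ltngtP i j) => hij.
      - have := iter_clos g s j lg sg => /(congr1 (fun q : {poly R} => q`_k)).
        rewrite coefCM => ->; rewrite mulrA (_ : p`_j * g = 0) ?mul0r //; by have := pg _ hij 1; rewrite mulr1.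
      - rewrite [(iter _ _ s)`_k]nth_default ?mulr0 //; apply: leq_trans ds _; rewrite add1n; exact: leq_trans hij hk.
      - rewrite -hij in ds dc *; rewrite add0n coefC /= in dc; case: eqP => hki.
          by rewrite hki dc.
        rewrite [(iter _ _ s)`_k]nth_default ?mulr0 //; apply: leq_trans ds _; rewrite add1n ltn_neqAle hk andbT.
        by apply/eqP => hh; apply: hki.
    rewrite (eq_bigr _ (fun j _ => term j)) sum_if.
    case: ltnP => // hip; case: eqP => // _.
    by rewrite nth_default // mul0r.
  have sw : (size w <= i.+1)%N.
    apply/leq_sizeP => k hk; rewrite wk ?(ltnW hk) //.
    by rewrite gtn_eqF.
  have := H s; rewrite -/w (@omE w t _ sw) => /(congr1 (fun q : {poly R} => q`_(i + m))).
  rewrite coef0 coef_sum big_ord_recr /= big1 ?add0r; last first.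
    move=> k _; rewrite coefCM; have [ds _] := iter_deg _ _ (k : nat) (eq_leq st).
    rewrite [(iter _ _ t)`__]nth_default ?mulr0 //; apply: leq_trans ds _.
    by rewrite addSn addnC ltn_add2r ltn_ord.
  rewrite coefCM wk // eqxx; have [_ dc] := iter_deg _ _ i (eq_leq st).
  rewrite addnC dc -mulrA -iterM -(mulrA r) -gb => /Cn.
  by rewrite mulrA.
move=> i r; apply: (main (size p)); exact: leq_addl.
Qed.


Lemma dir1 (p : {poly R}) e : lsc e ->
  (forall y, (forall i, (i < size p)%N -> forall r, p`_i * r * y = 0) <-> y = e * y) ->
  forall t, (forall s, om (om p s) t = 0) -> t = e%:P * t.
Proof.
move=> le he t.
move: {2}(size t) (leqnn (size t)) => n; elim: n t => [|n IH] t ht H.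
  by move: ht; rewrite size_poly_leq0 => /eqP ->; rewrite mulr0.
case st: (size t) => [|m].
  by move/eqP: st; rewrite size_poly_eq0 => /eqP ->; rewrite mulr0.
have hb : t`_m = e * t`_m by apply: (proj1 (he _)) => i _ r; exact: key _ _ _ st H i r.
pose u := (t`_m)%:P * 'X^m.
have hu : u = e%:P * u by rewrite /u mulrA -polyCM -hb.
have hu0 : forall s, om (om p s) u = 0 by move=> s; apply: (kill _ _ _ le (coef_kill _ _ s le he) hu).
have st' : (size (t - u)%R <= n)%N.
  apply: (@leq_trans m); last by rewrite -ltnS -st.
  apply/leq_sizeP => k; rewrite coefB /u coefCM coefXn.
  rewrite leq_eqVlt => /orP [/eqP <- | hk]; first by rewrite eqxx mulr1 subrr.
  by rewrite (gtn_eqF hk) mulr0 subr0 nth_default ?st.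
have Hs : forall s, om (om p s) (t - u) = 0 by move=> s; rewrite omB H hu0 subrr.
have := IH _ st' Hs; rewrite mulrBr -hu => /eqP; rewrite subr_eq subrK => /eqP //.
Qed.

End Proof.

Lemma rigid_C (R : nzRingType) (sigma : {rmorphism R -> R}) : sigma_rigid sigma -> cond_C sigma.
Proof.
move=> rig.
have red : forall a : R, a * a = 0 -> a = 0.
  move=> a h; apply: (rig); apply: (rig).
  by rewrite rmorphM !mulrA -(mulrA a (sigma a)) -rmorphM h rmorph0 mulr0 !mul0r.
have comm : forall a b : R, a * b = 0 -> b * a = 0.
  by move=> a b h; apply: red; rewrite mulrA -(mulrA b) h mulr0 mul0r.
move=> a b h.
apply: (comm); apply: (rig).
by rewrite rmorphM !mulrA -(mulrA b) h mulr0 !mul0r.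
Qed.


Theorem corollary3p4 (R : nzRingType) (sigma : {rmorphism R -> R}) (delta : R -> R) :
  sigma_derivation sigma delta ->
  right_pq_Baer (@GRing.mul R) 0 ->
  ( (skew_Armendariz sigma delta /\ cond_C sigma)
    \/ ((forall e : R, in_Sl e <-> in_B e) /\
        (forall e : R, in_B e -> forall r : R, exists s : R, sigma (r * e) = s * e) /\
        cond_C sigma)
    \/ sigma_rigid sigma ) ->
  right_pq_Baer (ore_mul sigma delta) 0.
Proof.
move=> Hd HB Hcase.
have HC : cond_C sigma.
  case: Hcase => [[_ h] | [[_ [_ h]] | h]] //; exact: rigid_C.
move=> a.
have [e [le he]] := E_exists _ HB (fun i => a`_i) (size a).
have [ie re] := le.
exists e%:P; split; first by rewrite omC -polyCM ie.
move=> t; split.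
  move=> H; exists t; rewrite omC; exact: (dir1 _ _ _ Hd HC HB _ _ le he _ H).
move=> [u ->] s; rewrite omC.
apply: (kill _ _ _ Hd HC _ _ _ le (coef_kill _ _ _ _ _ _ le he)).
by rewrite mulrA -polyCM ie.
Qed.
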